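(* Let $n$ be a positive integer and let $G$ be a subgroup of $U(n)$. Then for every $\vec v \in S(n)$, $\lambda(G)$ divides $\#\mathrm{Orb}(G;\vec v)$.
   Context: $U(n)$ is the group (under matrix multiplication) of $2\times 2$ matrices $\begin{bmatrix} a & b \\ 0 & 1\end{bmatrix}$ with $a \in (\mathbb{Z}/n\mathbb{Z})^\times$ and $b \in \mathbb{Z}/n\mathbb{Z}$. $S(n)$ is the set of column vectors $\begin{bmatrix} j \\ 1\end{bmatrix}$ with $j \in \mathbb{Z}/n\mathbb{Z}$, on which $U(n)$ acts by matrix–vector multiplication: $\begin{bmatrix} a & b \\ 0 & 1\end{bmatrix}\begin{bmatrix} j \\ 1\end{bmatrix} = \begin{bmatrix} aj+b \\ 1\end{bmatrix}$. $\mathrm{Orb}(G;\vec v)$ is the orbit of $\vec v$ under $G$, and $\#X$ is the cardinality of $X$. $\lambda(G)$ is the minimum of $\#\mathrm{Orb}(G;\vec v)$ over $\vec v \in S(n)$. *)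

(* Defs.v *)
From mathcomp Require Import all_boot all_order all_algebra.
Set Implicit Arguments. Unset Strict Implicit. Unset Printing Implicit Defensive.

(* Throughout, the modulus is n = m.+1 (an arbitrary positive integer), and
   Z/nZ is represented by the ordinal type 'I_m.+1 with the Zp operations
   (Zp_add, Zp_mul, Zp0, Zp1), which are arithmetic mod m.+1 for every m
   (including n = 1). *)

(* An element [[a, b], [0, 1]] of the affine matrix group is encoded as (a, b). *)
Definition affmx (m : nat) : finType := ('I_m.+1 * 'I_m.+1)%type.

Definition inU (m : nat) (g : affmx m) : bool := coprime g.1 m.+1.

(* Matrix product [[a,b],[0,1]] * [[c,d],[0,1]] = [[a c, a d + b],[0,1]]. *)
Definition mulU (m : nat) (g h : affmx m) : affmx m :=
  (Zp_mul g.1 h.1, Zp_add (Zp_mul g.1 h.2) g.2).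

Definition idU (m : nat) : affmx m := (Zp1, Zp0).

Definition subgroupU (m : nat) (G : {set affmx m}) : Prop :=
  [/\ {in G, forall g, inU g},
      idU m \in G,
      {in G &, forall g h, mulU g h \in G} &
      {in G, forall g, exists2 h, h \in G & mulU g h = idU m}].

(* Action on S(n): [[a,b],[0,1]] [j;1] = [a j + b; 1]; a vector [j;1] is
   identified with j : Z/nZ. *)
Definition actU (m : nat) (g : affmx m) (j : 'I_m.+1) : 'I_m.+1 :=
  Zp_add (Zp_mul g.1 j) g.2.

Definition orbU (m : nat) (G : {set affmx m}) (j : 'I_m.+1) : {set 'I_m.+1} :=
  [set actU g j | g in G].

Definition lambdaU (m : nat) (G : {set affmx m}) : nat :=
  \big[minn/#|orbU G ord0|]_(j : 'I_m.+1) #|orbU G j|.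

(* Main.v *)
Require Import Defs.
From mathcomp Require Import all_boot all_order all_algebra all_fingroup all_solvable.
From mathcomp Require Import ring zify.
Set Implicit Arguments. Unset Strict Implicit. Unset Printing Implicit Defensive.
Import GRing.Theory.
Local Open Scope ring_scope.

Section Gen.
Variable R : finComUnitRingType.
Variable G : {set R * R}.
Hypothesis hU : {in G, forall g, g.1 \is a GRing.unit}.
Hypothesis h1 : (1, 0) \in G.
Hypothesis hM : {in G &, forall g h, (g.1 * h.1, g.1 * h.2 + g.2) \in G}.
Hypothesis hI : {in G, forall g, exists2 h, h \in G & (g.1 * h.1, g.1 * h.2 + g.2) = (1, 0)}.

Definition act (g : R * R) (x : R) := g.1 * x + g.2.
Definition inH (h : R) := (1, h) \in G.

Lemma H0 : inH 0. Proof. exact: h1. Qed.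
Lemma HD a b : inH a -> inH b -> inH (a + b).
Proof. by move=> ha hb; have := hM ha hb; rewrite /= !mul1r addrC. Qed.
Lemma HN a : inH a -> inH (- a).
Proof.
move=> ha; have [h hG] := hI ha; rewrite /= !mul1r => -[e1 e2].
rewrite /inH -e1 (_ : -a = h.2); first by rewrite -surjective_pairing.
by apply/eqP; rewrite eq_sym -subr_eq0 opprK e2.
Qed.
Lemma HB a b : inH a -> inH b -> inH (a - b).
Proof. by move=> ha hb; apply: HD => //; apply: HN. Qed.
Lemma HMn a k : inH a -> inH (a *+ k).
Proof. move=> ha; elim: k => [|k IH]; first by rewrite mulr0n; exact: H0.
by rewrite mulrS; apply: HD. Qed.
Lemma Hsum (I : finType) (P : pred I) F : (forall i, P i -> inH (F i)) -> inH (\sum_(i | P i) F i).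
Proof. move=> hF; apply: (big_ind inH); [exact: H0 | exact: HD | exact: hF]. Qed.
Lemma Hdiff a b b' : (a, b) \in G -> (a, b') \in G -> inH (b - b').
Proof.
move=> g1 g2; have [h hG] := hI g2; rewrite /= => -[e1 e2].
have := hM g1 hG; rewrite /= e1 /inH (_ : a * h.2 + b = b - b') //.
have -> : a * h.2 = - b' by apply/eqP; rewrite -addr_eq0 e2.
by rewrite addrC.
Qed.
Lemma Hshift a b h : (a, b) \in G -> inH h -> (a, b + h) \in G.
Proof. by move=> g hh; have := hM hh g; rewrite /= !mul1r addrC. Qed.
Lemma act_mul g h x : act (g.1 * h.1, g.1 * h.2 + g.2) x = act g (act h x).
Proof. rewrite /act /=; ring. Qed.

Definition mul (g h : R * R) := (g.1 * h.1, g.1 * h.2 + g.2).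
Lemma mulG g h : g \in G -> h \in G -> mul g h \in G. Proof. exact: hM. Qed.
Lemma act_mulE g h x : act (mul g h) x = act g (act h x). Proof. exact: act_mul. Qed.
Lemma mulA g h k : mul g (mul h k) = mul (mul g h) k.
Proof. rewrite /mul /=; congr pair; ring. Qed.
Lemma mul1g g : mul (1, 0) g = g.
Proof. by rewrite /mul /= !mul1r addr0 -surjective_pairing. Qed.
Lemma inv2 g : g \in G -> exists2 h, h \in G & mul g h = (1, 0) /\ mul h g = (1, 0).
Proof.
move=> gG; have [h hG [e1 e2]] := hI gG; exists h => //; split; first by rewrite /mul e1 e2.
rewrite /mul (mulrC h.1) e1; congr pair.
have -> : h.1 * g.2 + h.2 = h.1 * (g.1 * h.2 + g.2).
  by rewrite mulrDr mulrA (mulrC h.1 g.1) e1 mul1r addrC.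
by rewrite e2 mulr0.
Qed.
Lemma mul_inj g : g \in G -> injective (mul g).
Proof.
move=> gG h k /=; have [g' _ [_ e]] := inv2 gG.
move=> ehk; by rewrite -(mul1g h) -(mul1g k) -e -!mulA ehk.
Qed.

Definition Stab x := [set g in G | act g x == x].
Definition orb x := [set act g x | g in G].

Lemma card_fiber x u : u \in orb x -> #|[set g in G | act g x == u]| = #|Stab x|.
Proof.
case/imsetP=> g0 g0G ->; rewrite -[#|Stab x|](card_imset _ (mul_inj g0G)); apply: eq_card => g.
apply/idP/idP.
  case/setIdP=> gG /eqP ex; have [g' g'G [e1 e2]] := inv2 g0G.
  apply/imsetP; exists (mul g' g); last by rewrite mulA e1 mul1g.
  by rewrite inE mulG //= act_mulE ex -act_mulE e2 /act /= mul1r addr0.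
case/imsetP=> h /setIdP[hG /eqP ex] ->.
by rewrite inE mulG //= act_mulE ex.
Qed.

Lemma orbit_stab x : #|G| = (#|orb x| * #|Stab x|)%N.
Proof.
rewrite -sum1_card (partition_big (fun g => act g x) (mem (orb x))); last first.
  by move=> g gG; apply/imsetP; exists g.
rewrite -sum_nat_const; apply: eq_bigr => u uo.
by rewrite -(card_fiber uo) -sum1_card; apply: eq_bigl => g; rewrite inE.
Qed.

Definition Av x : {set {unit R}} :=
  [set u : {unit R} | [exists g in G, (g.1 == val u) && (act g x == x)]].

Lemma AvP x (u : {unit R}) : reflect (exists2 g, g \in G & g.1 = val u /\ act g x = x) (u \in Av x).
Proof.
rewrite inE; apply: (iffP existsP) => [[g /andP[gG /andP[/eqP e1 /eqP e2]]]|[g gG [e1 e2]]].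
  by exists g.
by exists g; rewrite gG e1 e2 !eqxx.
Qed.

Lemma Av_group x : group_set (Av x).
Proof.
apply/group_setP; split.
  by apply/AvP; exists (1, 0) => //; split => //; rewrite /act /= mul1r addr0.
move=> u v /AvP[g gG [e1 e2]] /AvP[h hG [f1 f2]]; apply/AvP.
by exists (mul g h); [exact: mulG | rewrite act_mulE f2 e2 /= e1 f1].
Qed.
Canonical Av_grp x := Group (Av_group x).

Lemma card_Av x : #|Stab x| = #|Av x|.
Proof.
pose phi (g : R * R) : {unit R} := insubd (1%g : {unit R}) g.1.
have phiE g : g \in G -> val (phi g) = g.1 by move=> gG; rewrite /phi insubdK // unfold_in hU.
rewrite -(card_in_imset (f := phi)); last first.
  move=> g h /setIdP[gG /eqP ge] /setIdP[hG /eqP he] /(congr1 val); rewrite !phiE // => e.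
  rewrite [g]surjective_pairing [h]surjective_pairing -e; congr pair.
  by move: ge he; rewrite /act e => ge he; apply: (addrI (h.1 * x)); by rewrite ge he.
apply: eq_card => u; apply/imsetP/AvP.
  by case=> g /setIdP[gG /eqP ge] ->; exists g => //; rewrite phiE.
case=> g gG [e1 e2]; exists g; first by rewrite inE gG e2 eqxx.
by apply: val_inj; rewrite phiE.
Qed.

Lemma Hdiff' g h : g \in G -> h \in G -> g.1 = h.1 -> inH (g.2 - h.2).
Proof.
move=> gG hG e; apply: (@Hdiff g.1); first by rewrite -surjective_pairing.
by rewrite e -surjective_pairing.
Qed.

Definition rep (c : {unit R}) : R * R := odflt (1, 0) [pick g in G | g.1 == val c].
Lemma repP c : (exists2 g, g \in G & g.1 = val c) -> rep c \in G /\ (rep c).1 = val c.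
Proof.
case=> g gG e; rewrite /rep; case: pickP => [h /andP[hG /eqP ->] | /(_ g)] //=.
by rewrite gG e eqxx.
Qed.

Lemma W x y (Q : {group {unit R}}) : Q \subset Av y -> exists u,
  forall f, f \in G -> (act f x = x \/ exists2 c0, c0 \in Q & f.1 = val c0) ->
  inH (f.1 * u + f.2 *+ #|Q| - u).
Proof.
move=> sQ; have repQ c : c \in Q -> rep c \in G /\ (rep c).1 = val c.
  move=> cQ; apply: repP; have /AvP[g gG [e _]] := subsetP sQ c cQ; by exists g.
exists (\sum_(c in Q) act (rep c) x) => f fG hf.
have -> : f.1 * (\sum_(c in Q) act (rep c) x) + f.2 *+ #|Q| =
          \sum_(c in Q) act f (act (rep c) x).
  by rewrite [RHS]big_split /= -mulr_sumr sumr_const.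
case: hf => [fx | [c0 c0Q fc0]].
  rewrite -sumrB; apply: Hsum => c cQ; have [rG r1] := repQ c cQ.
  have := Hdiff' (mulG fG rG) (mulG rG fG); rewrite /mul /= mulrC => /(_ erefl).
  rewrite (_ : act f (act (rep c) x) - act (rep c) x =
       f.1 * (rep c).2 + f.2 - ((rep c).1 * f.2 + (rep c).2)) //.
  rewrite /act (_ : f.2 = x - f.1 * x); first ring.
  by rewrite -[X in X - _]fx addrAC subrr add0r.
rewrite [X in _ - X](reindex_inj (mulgI c0)) /=.
rewrite [X in _ - X](eq_bigl (fun c => c \in Q)); last by move=> c; rewrite groupMl.
rewrite -sumrB; apply: Hsum => c cQ; have [rG r1] := repQ c cQ.
have [r'G r'1] := repQ (c0 * c)%g (groupM c0Q cQ).
have := Hdiff' (mulG fG rG) r'G; rewrite /mul /= r'1 r1 fc0 => /(_ erefl).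
rewrite (_ : act f (act (rep c) x) - act (rep (c0 * c)%g) x =
       val c0 * (rep c).2 + f.2 - (rep (c0 * c)%g).2) //.
rewrite /act r'1 r1 fc0 /=; ring.
Qed.

Lemma fix_mod z (a : {unit R}) f : f \in G -> f.1 = val a -> inH (f.1 * z + f.2 - z) -> a \in Av z.
Proof.
move=> fG e hz; apply/AvP; exists (f.1, f.2 + - (f.1 * z + f.2 - z)).
  by apply: Hshift; [rewrite -surjective_pairing | apply: HN].
by split => //; rewrite /act /=; ring.
Qed.

Lemma comb (a b u w q p K N : R) : K * q = N * p + 1 ->
  a * (K * u - N * w) + b - (K * u - N * w) = K * (a * u + q * b - u) - N * (a * w + p * b - w).
Proof.
move=> E; transitivity (K * (a * u + q * b - u) - N * (a * w + p * b - w) + b * (1 + N * p - K * q)).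
  ring.
by rewrite E; ring.
Qed.

Lemma L x y (P Q : {group {unit R}}) : coprime #|Q| #|P| ->
  P \subset Av x -> Q \subset Av y -> exists z, P \subset Av z /\ Q \subset Av z.
Proof.
move=> cop sP sQ.
have [u Hu] := W x sQ; have [w Hw] := W y sP.
have qgt0 : (0 < #|Q|)%N by apply/card_gt0P; exists 1%g.
case: (egcdnP #|P| qgt0) => km kn Eb _; rewrite (eqP cop) in Eb.
pose z := u *+ km - w *+ kn.
have key f : f \in G -> inH (f.1 * u + f.2 *+ #|Q| - u) -> inH (f.1 * w + f.2 *+ #|P| - w) ->
    inH (f.1 * z + f.2 - z).
  move=> fG hu hw.
  have -> : f.1 * z + f.2 - z = (f.1 * u + f.2 *+ #|Q| - u) *+ km - (f.1 * w + f.2 *+ #|P| - w) *+ kn.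
    have E : (km%:R * #|Q|%:R : R) = kn%:R * #|P|%:R + 1 by rewrite -!natrM Eb natrD.
    rewrite /z -[u *+ km]mulr_natl -[w *+ kn]mulr_natl -[f.2 *+ #|Q|]mulr_natl -[f.2 *+ #|P|]mulr_natl.
    by rewrite -[(_ - u) *+ km]mulr_natl -[(_ - w) *+ kn]mulr_natl; apply: comb.
  by apply: HB; apply: HMn.
exists z; split; apply/subsetP => a aS.
  have /AvP[f fG [e1 e2]] := subsetP sP a aS.
  apply: (fix_mod fG e1); apply: key => //.
    by apply: Hu => //; left.
  by apply: Hw => //; right; exists a.
have /AvP[f fG [e1 e2]] := subsetP sQ a aS.
apply: (fix_mod fG e1); apply: key => //.
  by apply: Hu => //; right; exists a.
by apply: Hw => //; left.
Qed.

Lemma Av_abelian x : abelian (Av x).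
Proof. by apply/centsP => a _ b _; apply: val_inj; rewrite /= mulrC. Qed.

Lemma dvd_Av v w : (forall j, #|Av j| <= #|Av w|)%N -> (#|Av v| %| #|Av w|)%N.
Proof.
move=> hmax; have gt0 j : (0 < #|Av j|)%N by apply/card_gt0P; exists 1%g; exact: group1.
apply/dvdn_partP => // p; rewrite mem_primes => /and3P[pp _ _].
have [P sylP] := Sylow_exists p (Av_grp v).
have hallQ := nilpotent_pcore_Hall p^' (abelian_nil (Av_abelian w)).
set Q := ('O_p^'(Av w))%g in hallQ.
have cop : coprime #|Q| #|P|.
  apply: (pnat_coprime (pi := p^')); first exact: pHall_pgroup hallQ.
  by rewrite pnatNK; exact: pHall_pgroup sylP.
have [z [sPz sQz]] := L cop (pHall_sub sylP) (pcore_sub _ _).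
have le1 : (#|P| * #|Q| <= #|Av z|)%N.
  rewrite -TI_cardMg; last by apply: coprime_TIg; rewrite coprime_sym.
  by apply: subset_leq_card; rewrite mulG_subG sPz sQz.
rewrite (card_Hall sylP) (card_Hall hallQ) in le1.
have le2 := leq_trans le1 (hmax z); rewrite -{2}(partnC p (gt0 w)) leq_pmul2r in le2; last first.
  by rewrite part_gt0.
apply: dvdn_trans (dvdn_part p _); rewrite !p_part in le2 *.
by apply: dvdn_exp2l; rewrite -(leq_exp2l _ _ (prime_gt1 pp)).
Qed.

Lemma orb_dvd v w : (forall j, #|orb w| <= #|orb j|)%N -> (#|orb w| %| #|orb v|)%N.
Proof.
move=> hmin.
have os j : #|G| = (#|orb j| * #|Av j|)%N by rewrite (orbit_stab j) card_Av.
have agt0 j : (0 < #|Av j|)%N by apply/card_gt0P; exists 1%g; exact: group1.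
have hmax j : (#|Av j| <= #|Av w|)%N.
  have e := etrans (esym (os j)) (os w); have := hmin j; have := agt0 j; have := agt0 w.
  have : (0 < #|orb w|)%N by apply/card_gt0P; exists (act (1, 0) w); apply/imsetP; exists (1, 0).
  move: e; move: #|orb w| #|orb j| #|Av w| #|Av j| => a b c d e; nia.
have [k ek] := dvdnP (dvd_Av v hmax).
rewrite -(dvdn_pmul2r (agt0 v)) -(os v) (os w) ek mulnCA dvdn_mull //.
Qed.
End Gen.

Local Close Scope ring_scope.

Lemma lambda_min (m : nat) (G : {set affmx m}) :
  (exists w, lambdaU G = #|orbU G w|) /\ (forall j, lambdaU G <= #|orbU G j|)%N.
Proof.
split.
  rewrite /lambdaU; apply: (big_ind (fun x => exists w, x = #|orbU G w|)).
  - by exists ord0.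
  - by move=> a b [w1 ->] [w2 ->]; case: (leqP #|orbU G w1| #|orbU G w2|) => h;
      [exists w1 | exists w2].
  - by move=> j _; exists j.
move=> j; rewrite /lambdaU; have : j \in index_enum 'I_m.+1 by rewrite mem_index_enum.
elim: (index_enum _) => // a s IH; rewrite inE big_cons /= => /orP[/eqP <-|js].
  exact: geq_minl.
exact: leq_trans (geq_minr _ _) (IH js).
Qed.

Theorem proposition2p2 (m : nat) (G : {set affmx m}) :
  subgroupU G -> forall v : 'I_m.+1, lambdaU G %| #|orbU G v|.
Proof.
move=> [hU h1 hM hI] v.
have [[w ->] hmin] := lambda_min G.
case: m G hU h1 hM hI v w hmin => [|k] G hU h1 hM hI v w hmin.
  have o1 j : #|orbU G j| = 1%N.
    apply/eqP; rewrite eqn_leq; apply/andP; split.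
      by apply: (leq_trans (max_card _)); rewrite card_ord.
    by apply/card_gt0P; exists (actU (idU 0) j); apply/imsetP; exists (idU 0).
  by rewrite !o1.
pose R := 'Z_(k.+2).
have E : forall j, orbU G j = @orb R G j by [].
rewrite !E; apply: (@orb_dvd R G) => //.
- move=> g /hU; rewrite /inU => cop.
  by rewrite -[g.1]natr_Zp unitZpE // coprime_sym.
Qed.
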